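(* Let $\theta:(0,1)\to(0,\infty)$ be $C^1$, $X(r)=\int_{1/2}^r\theta(s)^{-1/2}ds$, $\mathcal F(r)=\frac12X(r)^2$, and let $\mathcal A(r_0,r_1)$ be the minimal action $$\mathcal A(r_0,r_1)=\inf\Big\{\int_0^1\Big(\frac{\dot r^2}{2\theta(r)}+\frac{\theta(r)}2\Big(\frac{d\mathcal F}{dr}(r)\Big)^2\Big)dt:\ r\in C^1([0,1];(0,1)),\ r(0)=r_0,\ r(1)=r_1\Big\}.$$ Define $D(r_0,r_1)=\mathcal A(r_0,r_1)-\frac12\mathcal A(r_0,r_0)-\frac12\mathcal A(r_1,r_1)$. Then for all $r_0,r_1\in(0,1)$, $$D(r_0,r_1)=\frac{1}{2\sinh1}\Big(\int_{r_0}^{r_1}\frac{ds}{\sqrt{\theta(s)}}\Big)^2.$$ *)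

(* Defs.v *)
From Stdlib Require Import Reals.
From Coquelicot Require Import Coquelicot.
Open Scope R_scope.

Definition C1_pos_on_01 (theta : R -> R) : Prop :=
  forall s, 0 < s < 1 ->
    0 < theta s /\ ex_derive theta s /\ continuous (Derive theta) s.

Definition Xf (theta : R -> R) (r : R) : R :=
  RInt (fun s => / sqrt (theta s)) (1/2) r.

Definition Ff (theta : R -> R) (r : R) : R := (Xf theta r) ^ 2 / 2.

Definition admissible (r0 r1 : R) (r : R -> R) : Prop :=
  (forall t, 0 <= t <= 1 ->
     ex_derive r t /\ continuous (Derive r) t /\ 0 < r t < 1)
  /\ r 0 = r0 /\ r 1 = r1.

Definition action (theta : R -> R) (r : R -> R) : R :=
  RInt (fun t => (Derive r t) ^ 2 / (2 * theta (r t))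
                 + theta (r t) / 2 * (Derive (Ff theta) (r t)) ^ 2) 0 1.

Definition minAction (theta : R -> R) (r0 r1 : R) : R :=
  real (Glb_Rbar (fun v => exists r, admissible r0 r1 r /\ v = action theta r)).

Definition Dfun (theta : R -> R) (r0 r1 : R) : R :=
  minAction theta r0 r1 - minAction theta r0 r0 / 2 - minAction theta r1 r1 / 2.

(* Main.v *)
Require Import Defs.
From Stdlib Require Import Reals Lra Psatz Ranalysis5.
From Coquelicot Require Import Coquelicot.
Open Scope R_scope.

Definition fth (theta : R -> R) (s : R) : R := / sqrt (theta s).

Lemma cpt (f : R -> R) x : continuous f x <-> continuity_pt f x.
Proof. symmetry; apply continuity_pt_filterlim. Qed.

Lemma loc_int (lo hi s : R) : lo < s < hi -> locally s (fun y => lo < y < hi).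
Proof.
  intros [H1 H2].
  assert (He : 0 < Rmin (s - lo) (hi - s)) by (apply Rmin_glb_lt; lra).
  exists (mkposreal _ He). intros y Hy.
  change (Rabs (y - s) < Rmin (s - lo) (hi - s)) in Hy.
  pose proof (Rmin_l (s - lo) (hi - s)). pose proof (Rmin_r (s - lo) (hi - s)).
  apply Rabs_def2 in Hy. lra.
Qed.

Lemma loc_cont (h : R -> R) (lo hi t : R) : continuous h t -> lo < h t < hi ->
  locally t (fun s => lo < h s < hi).
Proof.
  intros Hc Hb. apply (Hc (fun y => lo < y < hi)). apply loc_int. exact Hb.
Qed.

Lemma theta_cont theta (Ht : C1_pos_on_01 theta) s : 0 < s < 1 -> continuous theta s.
Proof. intros Hs. exact (@ex_derive_continuous R_AbsRing R_NormedModule theta s (proj1 (proj2 (Ht s Hs)))). Qed.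

Lemma theta_pos theta (Ht : C1_pos_on_01 theta) s : 0 < s < 1 -> 0 < theta s.
Proof. intros Hs. apply (Ht s Hs). Qed.

Lemma fth_cont theta (Ht : C1_pos_on_01 theta) s : 0 < s < 1 -> continuous (fth theta) s.
Proof.
  intros Hs. unfold fth. apply continuous_Rinv_comp.
  - apply (continuous_comp theta sqrt). now apply theta_cont. apply continuous_sqrt.
  - apply Rgt_not_eq, sqrt_lt_R0, theta_pos; auto.
Qed.

Lemma fth_pos theta (Ht : C1_pos_on_01 theta) s : 0 < s < 1 -> 0 < fth theta s.
Proof. intros Hs. unfold fth. apply Rinv_0_lt_compat, sqrt_lt_R0, theta_pos; auto. Qed.

Lemma fth_sq theta (Ht : C1_pos_on_01 theta) s : 0 < s < 1 -> fth theta s ^ 2 * theta s = 1.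
Proof.
  intros Hs. unfold fth. pose proof (theta_pos theta Ht s Hs).
  pose proof (sqrt_sqrt (theta s) (Rlt_le _ _ H)). pose proof (sqrt_lt_R0 _ H).
  rewrite <- H0 at 2. field. lra.
Qed.

Lemma ex_RInt_fth theta (Ht : C1_pos_on_01 theta) u v : 0 < u < 1 -> 0 < v < 1 ->
  ex_RInt (fth theta) u v.
Proof.
  intros Hu Hv. apply (@ex_RInt_continuous R_CompleteNormedModule). intros z Hz. apply fth_cont; auto.
  pose proof (Rmin_glb_lt u v 0). destruct Hz.
  split. apply Rlt_le_trans with (Rmin u v); auto. apply Rmin_glb_lt; lra.
  apply Rle_lt_trans with (Rmax u v); auto. apply Rmax_lub_lt; lra.
Qed.

Lemma Xf_RInt theta (Ht : C1_pos_on_01 theta) u v : 0 < u < 1 -> 0 < v < 1 ->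
  RInt (fun s => / sqrt (theta s)) u v = Xf theta v - Xf theta u.
Proof.
  intros Hu Hv. unfold Xf.
  assert (H : RInt (fth theta) (1/2) u + RInt (fth theta) u v = RInt (fth theta) (1/2) v).
  { apply (@RInt_Chasles R_CompleteNormedModule). apply ex_RInt_fth; auto; lra. apply ex_RInt_fth; auto. }
  unfold fth in H. rewrite <- H. unfold Rminus. rewrite (Rplus_comm (RInt _ _ u)), Rplus_assoc, Rplus_opp_r, Rplus_0_r. reflexivity.
Qed.

Lemma Xf_deriv theta (Ht : C1_pos_on_01 theta) s : 0 < s < 1 ->
  is_derive (Xf theta) s (fth theta s).
Proof.
  intros Hs. apply is_derive_RInt with (a := 1/2).
  - eapply filter_imp; [| apply (loc_int 0 1 s Hs)].
    intros y Hy. apply (@RInt_correct R_CompleteNormedModule). apply ex_RInt_fth; auto; lra.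
  - apply fth_cont; auto.
Qed.

Lemma Xf_lt theta (Ht : C1_pos_on_01 theta) u v : 0 < u -> u < v -> v < 1 ->
  Xf theta u < Xf theta v.
Proof.
  intros. assert (0 < RInt (fth theta) u v).
  apply RInt_gt_0; auto. intros; apply fth_pos; auto; lra.
  intros; apply fth_cont; auto; lra.
  unfold fth in H2. rewrite Xf_RInt in H2; auto; lra.
Qed.

Lemma Ff_deriv theta (Ht : C1_pos_on_01 theta) s : 0 < s < 1 ->
  Derive (Ff theta) s = Xf theta s * fth theta s.
Proof.
  intros Hs. apply is_derive_unique. unfold Ff.
  assert (H := is_derive_pow (Xf theta) 2 s _ (Xf_deriv theta Ht s Hs)).
  assert (H2 := is_derive_scal _ _ (/2) _ H).
  replace (Xf theta s * fth theta s) with (/ 2 * (INR 2 * fth theta s * Xf theta s ^ Init.Nat.pred 2))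
    by (simpl; field).
  eapply is_derive_ext; [| apply H2]. intros t; simpl. field.
Qed.
Definition yf (a b t : R) : R := (a * sinh (1 - t) + b * sinh t) / sinh 1.
Definition ypf (a b t : R) : R := (- a * cosh (1 - t) + b * cosh t) / sinh 1.

Lemma sinh1_pos : 0 < sinh 1.
Proof. unfold sinh. pose proof (exp_increasing (-(1)) 1 ltac:(lra)). lra. Qed.

Lemma yf_deriv a b t : is_derive (yf a b) t (ypf a b t).
Proof.
  unfold yf, ypf, sinh, cosh. pose proof sinh1_pos. unfold sinh in H.
  auto_derive. auto. replace (1 + - t) with (1 - t) by ring. field. lra.
Qed.

Lemma ypf_deriv a b t : is_derive (ypf a b) t (yf a b t).
Proof.
  unfold yf, ypf, sinh, cosh. pose proof sinh1_pos. unfold sinh in H.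
  auto_derive. auto. replace (1 + - t) with (1 - t) by ring. field. lra.
Qed.

Lemma yf_cont a b t : continuous (yf a b) t.
Proof. apply (@ex_derive_continuous R_AbsRing R_NormedModule). eexists; apply yf_deriv. Qed.
Lemma ypf_cont a b t : continuous (ypf a b) t.
Proof. apply (@ex_derive_continuous R_AbsRing R_NormedModule). eexists; apply ypf_deriv. Qed.

Lemma yf0 a b : yf a b 0 = a.
Proof. unfold yf. rewrite sinh_0, Rminus_0_r. pose proof sinh1_pos. field. lra. Qed.
Lemma yf1 a b : yf a b 1 = b.
Proof. unfold yf. rewrite Rminus_diag, sinh_0. pose proof sinh1_pos. field. lra. Qed.
Lemma ypf0 a b : ypf a b 0 = (- a * cosh 1 + b) / sinh 1.
Proof. unfold ypf. rewrite cosh_0, Rminus_0_r. f_equal; ring. Qed.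
Lemma ypf1 a b : ypf a b 1 = (- a + b * cosh 1) / sinh 1.
Proof. unfold ypf. rewrite Rminus_diag, cosh_0. f_equal. ring. Qed.

Lemma sinh_nonneg x : 0 <= x -> 0 <= sinh x.
Proof. intros. unfold sinh. destruct (Req_dec x 0). subst. rewrite Ropp_0. lra.
  pose proof (exp_increasing (-x) x ltac:(lra)). lra. Qed.

Lemma exp_ge1 x : 0 <= x -> 1 <= exp x.
Proof. intros. rewrite <- exp_0. destruct (Req_dec x 0). subst; lra. left; apply exp_increasing; lra. Qed.

Lemma sinh_sum t : 0 <= t <= 1 -> sinh (1 - t) + sinh t <= sinh 1.
Proof.
  intros Ht. unfold sinh.
  set (p := exp t). set (q := exp (1 - t)). set (E := exp 1).
  assert (Hpq : p * q = E). { unfold p, q, E. rewrite <- exp_plus. f_equal; ring. }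
  assert (Hp1 : 1 <= p) by (apply exp_ge1; lra).
  assert (Hq1 : 1 <= q) by (apply exp_ge1; lra).
  assert (Em : exp (- t) = q / E). { unfold q, E. unfold Rdiv. rewrite <- exp_Ropp, <- exp_plus. f_equal; ring. }
  assert (Em2 : exp (- (1 - t)) = p / E). { unfold p, E. unfold Rdiv. rewrite <- exp_Ropp, <- exp_plus. f_equal; ring. }
  assert (Em3 : exp (- (1)) = 1 / E). { unfold E. rewrite exp_Ropp. field. apply Rgt_not_eq, exp_pos. }
  rewrite Em, Em2, Em3. fold q p E.
  assert (HE : 0 < E) by (unfold E; apply exp_pos).
  assert (HE1 : 1 <= E) by nra.
  apply Rmult_le_reg_r with (2 * E). lra.
  replace (((q - p / E) / 2 + (p - q / E) / 2) * (2 * E)) with ((q + p) * E - (p + q)) by (field; lra).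
  replace ((E - 1 / E) / 2 * (2 * E)) with (E * E - 1) by (field; lra).
  clearbody p q E. assert (0 <= (p - 1) * (q - 1)) by (apply Rmult_le_pos; lra). nra.
Qed.

Lemma yf_range a b t : 0 <= t <= 1 ->
  Rmin (Rmin a b) 0 <= yf a b t <= Rmax (Rmax a b) 0.
Proof.
  intros Ht. pose proof sinh1_pos as K.
  assert (Hal : 0 <= sinh (1 - t)) by (apply sinh_nonneg; lra).
  assert (Hbe : 0 <= sinh t) by (apply sinh_nonneg; lra).
  pose proof (sinh_sum t Ht).
  set (M := Rmax (Rmax a b) 0). set (m := Rmin (Rmin a b) 0).
  assert (a <= M /\ b <= M /\ 0 <= M) as [h1 [h2 h3]].
  { unfold M. pose proof (Rmax_l (Rmax a b) 0). pose proof (Rmax_r (Rmax a b) 0).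
    pose proof (Rmax_l a b). pose proof (Rmax_r a b). lra. }
  assert (m <= a /\ m <= b /\ m <= 0) as [g1 [g2 g3]].
  { unfold m. pose proof (Rmin_l (Rmin a b) 0). pose proof (Rmin_r (Rmin a b) 0).
    pose proof (Rmin_l a b). pose proof (Rmin_r a b). lra. }
  unfold yf. split.
  - apply Rmult_le_reg_r with (sinh 1); auto. unfold Rdiv. rewrite Rmult_assoc, Rinv_l, Rmult_1_r by lra.
    nra.
  - apply Rmult_le_reg_r with (sinh 1); auto. unfold Rdiv. rewrite Rmult_assoc, Rinv_l, Rmult_1_r by lra.
    nra.
Qed.

Lemma c_plus (f g : R -> R) x : continuous f x -> continuous g x -> continuous (fun t => f t + g t) x.
Proof. intros. exact (@continuous_plus R_UniformSpace R_AbsRing R_NormedModule f g x H H0). Qed.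
Lemma c_mult (f g : R -> R) x : continuous f x -> continuous g x -> continuous (fun t => f t * g t) x.
Proof. intros. exact (@continuous_mult R_UniformSpace R_AbsRing f g x H H0). Qed.
Lemma c_const (c : R) (x : R) : continuous (fun _ : R => c) x.
Proof. apply continuous_const. Qed.
Lemma c_minus (f g : R -> R) x : continuous f x -> continuous g x -> continuous (fun t => f t - g t) x.
Proof. intros. apply c_plus; auto.
  exact (@continuous_opp R_UniformSpace R_AbsRing R_NormedModule g x H0). Qed.
Lemma c_sq (f : R -> R) x : continuous f x -> continuous (fun t => f t ^ 2) x.
Proof. intros. simpl. apply c_mult; auto. apply c_mult; auto. apply c_const. Qed.
Lemma c_div2 (f : R -> R) x : continuous f x -> continuous (fun t => f t / 2) x.
Proof. intros. apply c_mult; auto. apply c_const. Qed.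

Definition xpf theta (r : R -> R) t := fth theta (r t) * Derive r t.
Definition Hf theta (r : R -> R) a b t :=
  ((xpf theta r t - ypf a b t) ^ 2 + (Xf theta (r t) - yf a b t) ^ 2) / 2.
Definition G2 theta (r : R -> R) a b t :=
  (2 * ypf a b t * Xf theta (r t) - yf a b t * ypf a b t) / 2.
Definition Gd2 theta (r : R -> R) a b t :=
  (2 * yf a b t * Xf theta (r t) + 2 * ypf a b t * xpf theta r t - ypf a b t ^ 2 - yf a b t ^ 2) / 2.
Definition Aval a b := ((a ^ 2 + b ^ 2) * cosh 1 - 2 * a * b) / (2 * sinh 1).

Section Pt.
Lemma adm_pt theta (Ht : C1_pos_on_01 theta) r0 r1 r (Hr : admissible r0 r1 r) t (Ht01 : 0 <= t <= 1) :
  continuous (fun t => Xf theta (r t)) t /\ continuous (xpf theta r) t /\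
  is_derive (fun t => Xf theta (r t)) t (xpf theta r t) /\ 0 < r t < 1.
Proof.
  destruct Hr as [Hr _]. destruct (Hr t Ht01) as [Hd [Hc Hb]].
  assert (Hrc : continuous r t) by exact (@ex_derive_continuous R_AbsRing R_NormedModule r t Hd).
  assert (HX := Xf_deriv theta Ht (r t) Hb).
  split; [|split; [|split]]; auto.
  - apply (continuous_comp r (Xf theta)); auto.
    exact (@ex_derive_continuous R_AbsRing R_NormedModule _ _ (ex_intro _ _ HX)).
  - unfold xpf. apply c_mult; auto.
    apply (continuous_comp r (fth theta)); auto. apply fth_cont; auto.
  - pose proof (is_derive_comp (Xf theta) r t _ _ HX (Derive_correct _ _ Hd)).
    unfold xpf. rewrite Rmult_comm. exact H.
Qed.
End Pt.

Lemma G2_deriv theta (Ht : C1_pos_on_01 theta) r0 r1 r (Hr : admissible r0 r1 r) a b t :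
  0 <= t <= 1 -> is_derive (G2 theta r a b) t (Gd2 theta r a b t).
Proof.
  intros Ht01. destruct (adm_pt theta Ht r0 r1 r Hr t Ht01) as [_ [_ [HD _]]].
  unfold G2.
  set (x := fun t => Xf theta (r t)) in *.
  change (is_derive (fun t => (2 * ypf a b t * x t - yf a b t * ypf a b t) / 2) t (Gd2 theta r a b t)).
  auto_derive.
  - repeat split; eexists; eauto using yf_deriv, ypf_deriv.
  - replace (Derive (fun x0 => x x0) t) with (xpf theta r t) by (symmetry; apply is_derive_unique; exact HD).
    replace (Derive (fun x0 => yf a b x0) t) with (ypf a b t) by (symmetry; apply is_derive_unique; apply yf_deriv).
    replace (Derive (fun x0 => ypf a b x0) t) with (yf a b t) by (symmetry; apply is_derive_unique; apply ypf_deriv).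
    unfold Gd2, x. field.
Qed.

Lemma action_decomp theta (Ht : C1_pos_on_01 theta) r0 r1 r (Hr : admissible r0 r1 r) :
  action theta r = Aval (Xf theta r0) (Xf theta r1) + RInt (Hf theta r (Xf theta r0) (Xf theta r1)) 0 1
  /\ ex_RInt (Hf theta r (Xf theta r0) (Xf theta r1)) 0 1.
Proof.
  set (a := Xf theta r0). set (b := Xf theta r1).
  assert (HcH : forall t, Rmin 0 1 <= t <= Rmax 0 1 -> continuous (Hf theta r a b) t).
  { intros t Ht01. rewrite Rmin_left, Rmax_right in Ht01 by lra.
    destruct (adm_pt theta Ht r0 r1 r Hr t Ht01) as [Hx [Hxp _]].
    unfold Hf. apply c_div2, c_plus; apply c_sq, c_minus; auto using yf_cont, ypf_cont. }
  assert (HcG : forall t, Rmin 0 1 <= t <= Rmax 0 1 -> continuous (Gd2 theta r a b) t).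
  { intros t Ht01. rewrite Rmin_left, Rmax_right in Ht01 by lra.
    destruct (adm_pt theta Ht r0 r1 r Hr t Ht01) as [Hx [Hxp _]].
    unfold Gd2. apply c_div2. apply c_minus; [apply c_minus|]; [apply c_plus| |];
      try apply c_sq; auto using yf_cont, ypf_cont;
      (apply c_mult; [apply c_mult; [apply c_const|]|]); auto using yf_cont, ypf_cont. }
  assert (HI : is_RInt (Gd2 theta r a b) 0 1 (minus (G2 theta r a b 1) (G2 theta r a b 0))).
  { apply (@is_RInt_derive R_CompleteNormedModule); auto.
    intros t Ht01. rewrite Rmin_left, Rmax_right in Ht01 by lra.
    eapply G2_deriv; eauto. }
  assert (HexH : ex_RInt (Hf theta r a b) 0 1) by (apply (@ex_RInt_continuous R_CompleteNormedModule); auto).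
  split; auto.
  unfold action.
  rewrite (@RInt_ext R_CompleteNormedModule _ (fun t => plus (Gd2 theta r a b t) (Hf theta r a b t))).
  2: { intros t Ht01. rewrite Rmin_left, Rmax_right in Ht01 by lra.
       destruct (adm_pt theta Ht r0 r1 r Hr t ltac:(lra)) as [_ [_ [_ Hb]]].
       rewrite (Ff_deriv theta Ht _ Hb).
       pose proof (fth_sq theta Ht _ Hb) as HFT.
       pose proof (theta_pos theta Ht _ Hb) as Hpos.
       change (plus ?x ?y) with (Rplus x y).
       unfold Gd2, Hf, xpf.
       set (F := fth theta (r t)) in *. set (T := theta (r t)) in *.
       set (Dr := Derive r t). set (X := Xf theta (r t)).
       match goal with |- @eq _ ?l ?r => change (@eq R l r) end.
       transitivity (Dr ^ 2 / (2 * T) + X ^ 2 * (F ^ 2 * T) / 2). field. lra.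
       transitivity ((F ^ 2 * T) * Dr ^ 2 / (2 * T) + X ^ 2 / 2).
       rewrite HFT. field. lra. field. lra. }
  rewrite (@RInt_plus R_CompleteNormedModule); auto.
  2: { eexists; exact HI. }
  rewrite (@is_RInt_unique R_CompleteNormedModule _ _ _ _ HI).
  change (plus ?x ?y) with (Rplus x y).
  change (minus ?x ?y) with (Rminus x y).
  f_equal.
  destruct Hr as [_ [E0 E1]].
  unfold G2, Aval. rewrite yf0, yf1, ypf0, ypf1, E0, E1. fold a b.
  pose proof sinh1_pos. field. lra.
Qed.

Lemma inv_fun (X : R -> R) c d : c < d -> (forall x, c <= x <= d -> continuity_pt X x) ->
  {g : R -> R | forall u, X c <= u <= X d -> c <= g u <= d /\ X (g u) = u}.
Proof.
  intros Hcd Hcont.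
  exists (fun u => match Rle_dec (X c) u with
                  | left h1 => match Rle_dec u (X d) with
                               | left h2 => proj1_sig (f_interv_is_interv X c d u Hcd (conj h1 h2) Hcont)
                               | right _ => c end
                  | right _ => c end).
  intros u Hu. destruct (Rle_dec (X c) u) as [h1|h1]; [|lra].
  destruct (Rle_dec u (X d)) as [h2|h2]; [|lra].
  destruct (f_interv_is_interv X c d u Hcd (conj h1 h2) Hcont) as [x Hx]. simpl. exact Hx.
Qed.

Lemma Xf_cpt theta (Ht : C1_pos_on_01 theta) x : 0 < x < 1 -> continuity_pt (Xf theta) x.
Proof. intros. apply cpt. exact (@ex_derive_continuous R_AbsRing R_NormedModule _ _ (ex_intro _ _ (Xf_deriv theta Ht x H))). Qed.

Lemma Xf_inj theta (Ht : C1_pos_on_01 theta) u v : 0 < u < 1 -> 0 < v < 1 -> Xf theta u = Xf theta v -> u = v.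
Proof.
  intros Hu Hv E. destruct (Rtotal_order u v) as [h|[h|h]]; auto.
  pose proof (Xf_lt theta Ht u v ltac:(lra) h ltac:(lra)); lra.
  pose proof (Xf_lt theta Ht v u ltac:(lra) h ltac:(lra)); lra.
Qed.

Lemma inv_props theta (Ht : C1_pos_on_01 theta) c d (Hc : 0 < c) (Hcd : c < d) (Hd : d < 1) :
  exists g, (forall u, Xf theta c <= u <= Xf theta d -> c <= g u <= d /\ Xf theta (g u) = u) /\
   (forall u, Xf theta c < u < Xf theta d -> continuous g u /\ is_derive g u (/ fth theta (g u))).
Proof.
  set (X := Xf theta).
  assert (Hcont : forall x, c <= x <= d -> continuity_pt X x) by (intros; apply Xf_cpt; auto; lra).
  destruct (inv_fun X c d Hcd Hcont) as [g Hg].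
  assert (Hincr : forall x y, c <= x -> x < y -> y <= d -> X x < X y) by (intros; apply Xf_lt; auto; lra).
  assert (HXcd : X c < X d) by (apply Hincr; lra).
  assert (Hcomp : forall x, X c <= x -> x <= X d -> comp X g x = id x).
  { intros. unfold comp, id. apply Hg; lra. }
  assert (Hwf : forall x, X c <= x -> x <= X d -> c <= g x <= d) by (intros; apply Hg; lra).
  assert (Hgc : g (X c) = c).
  { destruct (Hg (X c) ltac:(lra)). apply (Xf_inj theta Ht); auto; lra. }
  assert (Hgd : g (X d) = d).
  { destruct (Hg (X d) ltac:(lra)). apply (Xf_inj theta Ht); auto; lra. }
  exists g. split; auto.
  intros u Hu.
  assert (Hgc' : continuity_pt g u) by (apply (continuity_pt_recip_interv X g c d); auto).
  split. apply cpt; auto.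
  assert (Prf : forall a, g (X c) <= a <= g (X d) -> derivable_pt X a).
  { intros a0 Ha0. rewrite Hgc, Hgd in Ha0.
    exists (fth theta a0). apply is_derive_Reals. apply Xf_deriv; auto; lra. }
  assert (Prg_incr : g (X c) <= g u <= g (X d)).
  { rewrite Hgc, Hgd. apply Hg; lra. }
  assert (Hgu : c <= g u <= d) by (apply Hg; lra).
  assert (Hdp : derive_pt X (g u) (Prf (g u) Prg_incr) = fth theta (g u)).
  { apply derive_pt_eq_0. apply is_derive_Reals. apply Xf_deriv; auto; lra. }
  assert (Hnz : derive_pt X (g u) (Prf (g u) Prg_incr) <> 0).
  { rewrite Hdp. apply Rgt_not_eq, fth_pos; auto; lra. }
  pose proof (derivable_pt_lim_recip_interv X g (X c) (X d) u Prf Hgc' HXcd Hu Prg_incr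
               ltac:(intros; apply Hcomp; lra) Hnz) as HL.
  rewrite Hdp in HL. apply is_derive_Reals. unfold Rdiv in HL. rewrite Rmult_1_l in HL. exact HL.
Qed.

Lemma Xf_le theta (Ht : C1_pos_on_01 theta) u v : 0 < u -> u <= v -> v < 1 -> Xf theta u <= Xf theta v.
Proof. intros. destruct (Req_dec u v). subst; lra. left; apply Xf_lt; auto; lra. Qed.

Lemma Xf_half theta : Xf theta (1/2) = 0.
Proof. unfold Xf. rewrite RInt_point. reflexivity. Qed.

Lemma path_exists theta (Ht : C1_pos_on_01 theta) r0 r1 (H0 : 0 < r0 < 1) (H1 : 0 < r1 < 1) :
  exists r, admissible r0 r1 r /\ forall t, 0 <= t <= 1 ->
    Xf theta (r t) = yf (Xf theta r0) (Xf theta r1) t /\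
    xpf theta r t = ypf (Xf theta r0) (Xf theta r1) t.
Proof.
  set (a := Xf theta r0). set (b := Xf theta r1).
  set (m := Rmin (Rmin r0 r1) (1/2)). set (M := Rmax (Rmax r0 r1) (1/2)).
  assert (Hm : 0 < m /\ m <= r0 /\ m <= r1 /\ m <= 1/2).
  { unfold m. pose proof (Rmin_l (Rmin r0 r1) (1/2)). pose proof (Rmin_r (Rmin r0 r1) (1/2)).
    pose proof (Rmin_l r0 r1). pose proof (Rmin_r r0 r1).
    repeat split; try lra. apply Rmin_glb_lt; [apply Rmin_glb_lt|]; lra. }
  assert (HM : M < 1 /\ r0 <= M /\ r1 <= M /\ 1/2 <= M).
  { unfold M. pose proof (Rmax_l (Rmax r0 r1) (1/2)). pose proof (Rmax_r (Rmax r0 r1) (1/2)).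
    pose proof (Rmax_l r0 r1). pose proof (Rmax_r r0 r1).
    repeat split; try lra. apply Rmax_lub_lt; [apply Rmax_lub_lt|]; lra. }
  set (c := m / 2). set (d := (M + 1) / 2).
  assert (Hcc : 0 < c < m) by (unfold c; lra). assert (Hdd : M < d < 1) by (unfold d; lra).
  clearbody c d m M. destruct Hm as [Hm1 [Hm2 [Hm3 Hm4]]]. destruct HM as [HM1 [HM2 [HM3 HM4]]].
  destruct (inv_props theta Ht c d ltac:(lra) ltac:(lra) ltac:(lra))
    as [g [Hg1 Hg2]].
  assert (Hyr : forall t, 0 <= t <= 1 -> Xf theta c < yf a b t < Xf theta d).
  { intros t Ht01. destruct (yf_range a b t Ht01) as [L U].
    assert (Xc : Xf theta c < Xf theta m) by (apply (Xf_lt theta Ht); lra).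
    assert (Xd : Xf theta M < Xf theta d) by (apply (Xf_lt theta Ht); lra).
    assert (Xm0 : Xf theta m <= 0) by (rewrite <- (Xf_half theta); apply Xf_le; auto; lra).
    assert (XM0 : 0 <= Xf theta M) by (rewrite <- (Xf_half theta); apply Xf_le; auto; lra).
    assert (Xma : Xf theta m <= a) by (apply Xf_le; auto; lra).
    assert (Xmb : Xf theta m <= b) by (apply Xf_le; auto; lra).
    assert (XMa : a <= Xf theta M) by (apply Xf_le; auto; lra).
    assert (XMb : b <= Xf theta M) by (apply Xf_le; auto; lra).
    split.
    - apply Rlt_le_trans with (2 := L). apply Rlt_le_trans with (Xf theta m); auto.
      apply Rmin_glb; [apply Rmin_glb|]; lra.
    - apply Rle_lt_trans with (1 := U). apply Rle_lt_trans with (Xf theta M); auto.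
      apply Rmax_lub; [apply Rmax_lub|]; lra. }
  assert (Hloc : forall t, 0 <= t <= 1 -> locally t (fun s => Xf theta c < yf a b s < Xf theta d)).
  { intros t Ht01. apply loc_cont. apply yf_cont. auto. }
  set (r := fun t => g (yf a b t)).
  assert (Hder : forall s, Xf theta c < yf a b s < Xf theta d ->
            is_derive r s (ypf a b s * / fth theta (g (yf a b s)))).
  { intros s Hs. destruct (Hg2 _ Hs) as [_ Hd].
    exact (is_derive_comp g (yf a b) s _ _ Hd (yf_deriv a b s)). }
  assert (Hgb : forall t, 0 <= t <= 1 -> c <= r t <= d).
  { intros t Ht01. apply Hg1. pose proof (Hyr t Ht01). lra. }
  assert (Hcd01 : 0 < c /\ d < 1) by lra.
  exists r. split; [split; [|split]|].
  - intros t Ht01. split; [|split].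
    + eexists; apply Hder; auto.
    + apply continuous_ext_loc with (g := fun s => ypf a b s * / fth theta (g (yf a b s))).
      * eapply filter_imp; [|apply (Hloc t Ht01)]. intros s Hs. symmetry. apply is_derive_unique, Hder; auto.
      * apply c_mult. apply ypf_cont. apply continuous_Rinv_comp.
        -- apply (continuous_comp (fun s => g (yf a b s)) (fth theta) t).
           ++ apply (continuous_comp (yf a b) g t). apply yf_cont. apply (Hg2 _ (Hyr t Ht01)).
           ++ apply fth_cont; auto. pose proof (Hgb t Ht01). unfold r in H. lra.
        -- apply Rgt_not_eq, fth_pos; auto. pose proof (Hgb t Ht01). unfold r in H. lra.
    + pose proof (Hgb t Ht01). lra.
  - unfold r. rewrite yf0. apply (Xf_inj theta Ht); auto.
    + pose proof (Hgb 0 ltac:(lra)). unfold r in H. rewrite yf0 in H. lra.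
    + apply Hg1. pose proof (Hyr 0 ltac:(lra)). rewrite yf0 in H. unfold a, b in *. lra.
  - unfold r. rewrite yf1. apply (Xf_inj theta Ht); auto.
    + pose proof (Hgb 1 ltac:(lra)). unfold r in H. rewrite yf1 in H. lra.
    + apply Hg1. pose proof (Hyr 1 ltac:(lra)). rewrite yf1 in H. unfold a, b in *. lra.
  - intros t Ht01. split.
    + apply Hg1. pose proof (Hyr t Ht01). lra.
    + unfold xpf. rewrite (is_derive_unique _ _ _ (Hder t (Hyr t Ht01))).
      assert (0 < fth theta (r t)) by (apply fth_pos; auto; pose proof (Hgb t Ht01); lra).
      unfold r in *. field. lra.
Qed.

Lemma minAction_eq theta (Ht : C1_pos_on_01 theta) r0 r1 (H0 : 0 < r0 < 1) (H1 : 0 < r1 < 1) :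
  minAction theta r0 r1 = Aval (Xf theta r0) (Xf theta r1).
Proof.
  unfold minAction.
  rewrite (is_glb_Rbar_unique _ (Finite (Aval (Xf theta r0) (Xf theta r1)))); [reflexivity|].
  split.
  - intros v [r [Hr ->]]. destruct (action_decomp theta Ht r0 r1 r Hr) as [E Hex].
    rewrite E. simpl. cut (0 <= RInt (Hf theta r (Xf theta r0) (Xf theta r1)) 0 1). lra.
    apply RInt_ge_0; auto. lra. intros t _. unfold Hf.
    apply Rmult_le_pos; [|lra]. apply Rplus_le_le_0_compat; apply pow2_ge_0.
  - intros l Hl. destruct (path_exists theta Ht r0 r1 H0 H1) as [r [Hr Hpt]].
    apply Hl. exists r. split; auto.
    destruct (action_decomp theta Ht r0 r1 r Hr) as [E Hex]. rewrite E.
    rewrite (@RInt_ext R_CompleteNormedModule _ (fun _ => 0)).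
    + rewrite RInt_const. unfold scal; simpl; unfold mult; simpl. rewrite Rmult_0_r, Rplus_0_r. reflexivity.
    + intros t Ht01. rewrite Rmin_left, Rmax_right in Ht01 by lra.
      destruct (Hpt t ltac:(lra)) as [E1 E2]. unfold Hf. rewrite E1, E2, !Rminus_diag. unfold pow. rewrite !Rmult_0_l, Rplus_0_l. unfold Rdiv. rewrite Rmult_0_l. reflexivity.
Qed.

Theorem mainTheorem13 (theta : R -> R) (Htheta : C1_pos_on_01 theta)
  (r0 r1 : R) (H0 : 0 < r0 < 1) (H1 : 0 < r1 < 1) :
  Dfun theta r0 r1 =
  / (2 * sinh 1) * (RInt (fun s => / sqrt (theta s)) r0 r1) ^ 2.
Proof.
  unfold Dfun. rewrite !minAction_eq; auto.
  rewrite Xf_RInt; auto. unfold Aval. pose proof sinh1_pos. field. lra.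
Qed.
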